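(* Let $A$ be a nonempty finite set of positive integers, let $n$ be a positive integer, let $B$ be a nonempty subset of $A$, and let $\alpha$ be a positive integer with $\alpha\le|B|$. Then: (a) If $\binom{|A|}{\alpha}=\sum_{d=1}^{\sup A}\mu(d)\binom{v(A,d)}{\alpha}$, then $\binom{|B|}{\alpha}=\sum_{d=1}^{\sup B}\mu(d)\binom{v(B,d)}{\alpha}$. (b) If $\binom{|A|}{\alpha}=\sum_{d\mid n}\mu(d)\binom{v(A,d)}{\alpha}$, then $\binom{|B|}{\alpha}=\sum_{d\mid n}\mu(d)\binom{v(B,d)}{\alpha}$. (c) If $\sum_{d=1}^{\sup A}\mu(d)\binom{v(A,d)}{\alpha}=0$, then $\sum_{d=1}^{\sup B}\mu(d)\binom{v(B,d)}{\alpha}=0$. (d) If $\sum_{d\mid n}\mu(d)\binom{v(A,d)}{\alpha}=0$, then $\sum_{d\mid n}\mu(d)\binom{v(B,d)}{\alpha}=0$.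
   Context: For a finite nonempty set $X$ of positive integers, $\sup X$ is its largest element. $\mu$ is the Möbius function. For a positive integer $d$, $v(X,d)$ is the number of multiples of $d$ in $X$. Binomial coefficients $\binom{m}{k}$ are $0$ when $k>m$. *)

(* Defs.v *)
From HB Require Import structures.
From mathcomp Require Import all_boot all_order all_algebra.
From mathcomp Require Import finmap.
Set Implicit Arguments. Unset Strict Implicit. Unset Printing Implicit Defensive.
Import Order.TTheory GRing.Theory Num.Theory.
Local Open Scope fset_scope.

(* Möbius function, integer-valued: mu 0 = 0 (never used),
   mu d = (-1)^(number of prime factors) if d squarefree, else 0. *)
Definition mobius (d : nat) : int :=
  if d == 0%N then 0%R
  else if all (fun p => logn p d <= 1)%N (primes d)
       then ((-1) ^+ size (primes d))%R else 0%R.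

(* sup X : largest element (0 for the empty set, never used here) *)
Definition supX (X : {fset nat}) : nat := \max_(x <- X) x.

Definition v (X : {fset nat}) (d : nat) : nat := #|` [fset x in X | d %| x]|.

Definition Ssup (X : {fset nat}) (alpha : nat) : int :=
  (\sum_(1 <= d < (supX X).+1) mobius d * ('C(v X d, alpha))%:Z)%R.

Definition Sdiv (X : {fset nat}) (n alpha : nat) : int :=
  (\sum_(d <- divisors n) mobius d * ('C(v X d, alpha))%:Z)%R.

(* Main.v *)
Require Import Defs.
From HB Require Import structures.
From mathcomp Require Import all_boot all_order all_algebra.
From mathcomp Require Import finmap.
Import Order.TTheory GRing.Theory Num.Theory.
Set Implicit Arguments. Unset Strict Implicit.
Local Open Scope ring_scope.

Lemma mob1 : mobius 1 = 1.
Proof. by []. Qed.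

Lemma mob_pp p e : prime p -> (p %| e)%N -> (0 < e)%N -> mobius (p * e) = 0.
Proof.
move=> pp pe e0; have p0 := prime_gt0 pp.
rewrite /mobius muln_eq0 eqn0Ngt p0 eqn0Ngt e0 /=.
case: ifP => // /allP /(_ p).
rewrite mem_primes pp muln_gt0 p0 e0 dvdn_mulr // lognM // logn_prime // eqxx.
have : p \in primes e by rewrite mem_primes pp e0 pe.
by rewrite -logn_gt0; move=> + /(_ isT); case: (logn p e).
Qed.

Lemma mob_pq p e : prime p -> ~~ (p %| e)%N -> (0 < e)%N -> mobius (p * e) = - mobius e.
Proof.
move=> pp pe e0; have p0 := prime_gt0 pp.
have hP : perm_eq (primes (p * e)) (p :: primes e).
  apply: uniq_perm; rewrite ?primes_uniq //=.
    rewrite primes_uniq andbT mem_primes pp e0 (negbTE pe) //.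
  move=> q; rewrite primesM // primes_prime // !inE //.
rewrite /mobius muln_eq0 eqn0Ngt p0 eqn0Ngt e0 /= (perm_size hP) /= exprS.
rewrite (perm_all _ hP) /= lognM // logn_prime // eqxx.
have -> : logn p e = 0%N by rewrite logn_coprime // prime_coprime.
have E : {in primes e, (fun q => (logn q (p*e) <= 1)%N) =1 (fun q => (logn q e <= 1)%N)}.
  move=> q qe /=; rewrite lognM // logn_prime //.
  case: eqP => // Eq; subst q; move: qe; rewrite mem_primes (negbTE pe).
  by rewrite !andbF.

rewrite (eq_in_all E) /=.
by case: ifP => _; rewrite ?mulN1r ?oppr0.
Qed.

Local Close Scope ring_scope.
Lemma mob_sum m : (0 < m)%N -> (\sum_(d <- divisors m) mobius d = (m == 1%N)%:R)%R.
Proof.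
move=> m0; case: (ltngtP m 1) => [|m1|->]; first by rewrite ltnNge m0.
  2: by rewrite /divisors /= big_seq1.
have pp := pdiv_prime m1; have pm := pdiv_dvd m.
set p := pdiv m in pp pm *.
have p0 := prime_gt0 pp.
have mp0 : (0 < m %/ p)%N by rewrite divn_gt0 // dvdn_leq.
have memD2 : forall e, (e \in filter (predC (dvdn p)) (divisors (m %/ p))) =
                        (e \in filter (predC (dvdn p)) (divisors m)).
  move=> e; rewrite !mem_filter /= -!dvdn_divisors //.
  case pe: (p %| e) => //=; apply/idP/idP => H.
    by apply: dvdn_trans H _; rewrite -{2}(divnK pm) dvdn_mulr.
  rewrite -(Gauss_dvdl _ (_ : coprime e p)); first by rewrite divnK.
  by rewrite coprime_sym prime_coprime // pe.
have P1 : perm_eq (filter (dvdn p) (divisors m)) (map (muln p) (divisors (m %/ p))).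
  apply: uniq_perm; first by rewrite filter_uniq // divisors_uniq.
    by rewrite map_inj_uniq ?divisors_uniq // => a b /eqP; rewrite eqn_pmul2l // => /eqP.
  move=> x; rewrite mem_filter -dvdn_divisors //; apply/idP/mapP.
    case/andP=> /dvdnP[e ->] xm; exists e; last by rewrite mulnC.
    by rewrite -dvdn_divisors // dvdn_divRL // mulnC.
  case=> e; rewrite -dvdn_divisors // => em ->; rewrite dvdn_mulr //=.
  by rewrite mulnC -dvdn_divRL.
have P2 : perm_eq (filter (predC (dvdn p)) (divisors (m %/ p)))
                  (filter (predC (dvdn p)) (divisors m)).
  by apply: uniq_perm; rewrite ?filter_uniq ?divisors_uniq.
rewrite (bigID (dvdn p)) /= -big_filter (perm_big _ P1) big_map.
rewrite (bigID (dvdn p)) /= big_seq_cond big1; last first.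
  move=> e /andP[]; rewrite -dvdn_divisors // => em pe; apply: mob_pp => //.
  exact: dvdn_gt0 em.
rewrite add0r big_seq_cond (eq_bigr (fun e => (- mobius e)%R)); last first.
  move=> e /andP[]; rewrite -dvdn_divisors // => em pe; apply: mob_pq => //.
  exact: dvdn_gt0 em.
rewrite sumrN -big_seq_cond -big_filter (perm_big _ P2) big_filter.
by rewrite addNr.
Qed.
Local Open Scope ring_scope.
Section Comb.
Variable T : finType.
Definition Sub (X : {set T}) k := [set S : {set T} | (S \subset X) && (#|S| == k)].
Definition cS (Ds : seq nat) (f : T -> nat) (S : {set T}) : int :=
  \sum_(d <- Ds | [forall x in S, (d %| f x)%N]) mobius d.

Lemma exch (X : {set T}) f k Ds :
  \sum_(d <- Ds) mobius d * ('C(#|[set x in X | (d %| f x)%N]|, k))%:Z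
  = \sum_(S in Sub X k) cS Ds f S.
Proof.
under eq_bigr => d _.
  rewrite -cards_draws.
  have -> : [set S : {set T} | S \subset [set x in X | (d %| f x)%N] & #|S| == k] =
     [set S in Sub X k | [forall x in S, (d %| f x)%N]].
    apply/setP => S; rewrite !inE; apply/idP/idP.
      case/andP=> /subsetP sS ->; rewrite andbT; apply/andP; split.
        by apply/subsetP => x /sS; rewrite inE => /andP[].
      by apply/forall_inP => x /sS; rewrite inE => /andP[].
    case/andP=> /andP[/subsetP sS ->] /forall_inP H; rewrite andbT.
    by apply/subsetP => x xS; rewrite inE sS // H.
  rewrite -natz mulr_natr -sumr_const (eq_bigl (fun S => (S \in Sub X k) && [forall x in S, (d %| f x)%N])); last by move=> S; rewrite inE.
  rewrite big_mkcondr /=.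
  over.
rewrite exchange_big /=; apply: eq_bigr => S _.
by rewrite /cS [RHS]big_mkcond.
Qed.

Lemma cS_div (n : nat) (S : {set T}) f : (0 < n)%N ->
  cS (divisors n) f S = \sum_(d <- divisors (gcdn n (\big[gcdn/0]_(x in S) f x))) mobius d.
Proof.
move=> n0; rewrite /cS -big_filter; apply: perm_big; apply: uniq_perm.
- by rewrite filter_uniq // divisors_uniq.
- exact: divisors_uniq.
move=> d; rewrite mem_filter -!dvdn_divisors ?gcdn_gt0 ?n0 // dvdn_gcd andbC.
congr (_ && _); apply/forall_inP/dvdn_biggcdP => H x xS; exact: H.
Qed.

Lemma cS_iota N (S : {set T}) f : S != set0 ->
  (forall x, x \in S -> 0 < f x <= N)%N ->
  cS (index_iota 1 N.+1) f S = \sum_(d <- divisors (\big[gcdn/0]_(x in S) f x)) mobius d.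
Proof.
case/set0Pn => x0 x0S Hf.
have gd : (\big[gcdn/0]_(x in S) f x %| f x0)%N by exact: biggcdn_inf x0S (dvdnn _).
have /andP[f0 fN] := Hf x0 x0S.
have g0 : (0 < \big[gcdn/0]_(x in S) f x)%N by exact: dvdn_gt0 gd.
rewrite /cS -big_filter; apply: perm_big; apply: uniq_perm.
- by rewrite filter_uniq // iota_uniq.
- exact: divisors_uniq.
move=> d; rewrite mem_filter -!dvdn_divisors // mem_index_iota.
have -> : [forall x in S, (d %| f x)%N] = (d %| \big[gcdn/0]_(x in S) f x)%N.
  by apply/forall_inP/dvdn_biggcdP => H x xS; exact: H.
case dg: (d %| _)%N => //=; rewrite (dvdn_gt0 g0 dg) /= ltnS.
exact: leq_trans (dvdn_leq g0 dg) (leq_trans (dvdn_leq f0 gd) fN).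
Qed.

Lemma allone (A B : {set T}) k (c : {set T} -> int) : B \subset A ->
  (forall S, 0 <= c S <= 1) ->
  (\sum_(S in Sub A k) c S = (#|Sub A k|)%:Z -> \sum_(S in Sub B k) c S = (#|Sub B k|)%:Z) /\
  (\sum_(S in Sub A k) c S = 0 -> \sum_(S in Sub B k) c S = 0).
Proof.
move=> sBA hc.
have sub : forall S, S \in Sub B k -> S \in Sub A k.
  move=> S; rewrite !inE => /andP[sSB ->]; rewrite andbT; exact: subset_trans sSB sBA.
split => H.
  have H1 : forall S, S \in Sub A k -> 1 - c S = 0.
    apply/psumr_eq0P; first by move=> S _; rewrite subr_ge0; case/andP: (hc S).
    by rewrite sumrB H sumr_const -natz subrr.
  rewrite -natz -sumr_const; apply: eq_bigr => S /sub /H1 /eqP.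
  by rewrite subr_eq0 => /eqP.
have H1 : forall S, S \in Sub A k -> c S = 0.
  apply/psumr_eq0P => // S _; by case/andP: (hc S).
by apply: big1 => S /sub /H1.
Qed.

End Comb.

Local Open Scope fset_scope.

Lemma card_Xs N (X : {fset nat}) : (forall x, x \in X -> x < N)%N ->
  #|` X| = #|[set i : 'I_N | val i \in X]|.
Proof.
move=> HX; rewrite cardE -(size_map val); apply: perm_size; apply: uniq_perm.
- exact: fset_uniq.
- by rewrite map_inj_uniq ?enum_uniq //; exact: val_inj.
move=> x; apply/idP/mapP.
  by move=> xX; exists (Ordinal (HX x xX)); rewrite // mem_enum inE.
by case=> i; rewrite mem_enum inE => + ->.
Qed.

Lemma le_supX (X : {fset nat}) x : x \in X -> (x <= supX X)%N.
Proof. by move=> xX; rewrite /supX; apply: (leq_bigmax_seq x). Qed.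

Lemma v_eq N X d : (forall x, x \in X -> x < N)%N ->
  v X d = #|[set i in [set i : 'I_N | val i \in X] | (d %| val i)%N]|.
Proof.
move=> HX; rewrite /v (@card_Xs N).
  by apply: eq_card => i; rewrite !inE.
by move=> x; rewrite !inE => /andP[/HX].
Qed.

Lemma gpos (T : finType) (S : {set T}) f : S != set0 -> (forall x, x \in S -> 0 < f x)%N ->
  (0 < \big[gcdn/0]_(x in S) f x)%N.
Proof.
case/set0Pn => x0 x0S Hf.
exact: dvdn_gt0 (Hf x0 x0S) (biggcdn_inf x0 x0S (dvdnn _)).
Qed.

Lemma Ssup_eq N X k : (0 < k)%N -> (forall x, x \in X -> 0 < x < N)%N ->
  Ssup X k = \sum_(S in Sub [set i : 'I_N | val i \in X] k)
               ((\big[gcdn/0]_(i in S) val i == 1)%N)%:R.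
Proof.
move=> k0 HX; rewrite /Ssup.
have HX' : forall x, x \in X -> (x < N)%N by move=> x /HX /andP[].
under eq_bigr => d _ do rewrite (v_eq d HX').
rewrite exch; apply: eq_bigr => S; rewrite inE => /andP[/subsetP sS /eqP Sk].
have S0 : S != set0 by rewrite -card_gt0 Sk.
have hpos : forall x, x \in S -> (0 < val x)%N.
  by move=> x /sS; rewrite inE => /HX /andP[].
rewrite (cS_iota S0) ?mob_sum ?gpos //.
move=> x xS; rewrite hpos //=; apply: le_supX.
by move: (sS x xS); rewrite inE.
Qed.

Lemma Sdiv_eq N X n k : (0 < n)%N -> (forall x, x \in X -> x < N)%N ->
  Sdiv X n k = \sum_(S in Sub [set i : 'I_N | val i \in X] k)
               ((gcdn n (\big[gcdn/0]_(i in S) val i) == 1)%N)%:R.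
Proof.
move=> n0 HX; rewrite /Sdiv.
under eq_bigr => d _ do rewrite (v_eq d HX).
rewrite exch; apply: eq_bigr => S _.
by rewrite cS_div ?mob_sum ?gcdn_gt0 ?n0.
Qed.

Lemma CSub N (X : {fset nat}) k : (forall x, x \in X -> x < N)%N ->
  ('C(#|` X|, k))%:Z = (#|Sub [set i : 'I_N | val i \in X] k|)%:Z.
Proof. by move=> HX; rewrite (@card_Xs N) // -cards_draws. Qed.

Lemma bool01 (b : bool) : 0 <= (b%:R : int) <= 1.
Proof. by case: b. Qed.

Theorem corollary5p4 (A B : {fset nat}) (n alpha : nat) :
  A != fset0 -> (forall x, x \in A -> 0 < x)%N -> (0 < n)%N ->
  B != fset0 -> B `<=` A -> (0 < alpha)%N -> (alpha <= #|` B|)%N ->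
  [/\ (('C(#|` A|, alpha))%:Z = Ssup A alpha -> ('C(#|` B|, alpha))%:Z = Ssup B alpha),
      (('C(#|` A|, alpha))%:Z = Sdiv A n alpha -> ('C(#|` B|, alpha))%:Z = Sdiv B n alpha),
      (Ssup A alpha = 0%R -> Ssup B alpha = 0%R)
    & (Sdiv A n alpha = 0%R -> Sdiv B n alpha = 0%R)].
Proof.
move=> _ Apos n0 _ /fsubsetP sBA a0 _.
pose N := (supX A).+1.
have HA : forall x, x \in A -> (0 < x < N)%N.
  by move=> x xA; rewrite Apos //= ltnS le_supX.
have HB : forall x, x \in B -> (0 < x < N)%N by move=> x /sBA /HA.
have HA' : forall x, x \in A -> (x < N)%N by move=> x /HA /andP[].
have HB' : forall x, x \in B -> (x < N)%N by move=> x /HB /andP[].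
have sub : [set i : 'I_N | val i \in B] \subset [set i : 'I_N | val i \in A].
  by apply/subsetP => i; rewrite !inE => /sBA.
rewrite (@CSub N A alpha HA') (@CSub N B alpha HB') (@Ssup_eq N A alpha a0 HA) (@Ssup_eq N B alpha a0 HB).
rewrite (@Sdiv_eq N A n alpha n0 HA') (@Sdiv_eq N B n alpha n0 HB').
have [h1 h2] := allone alpha sub (fun S => bool01 ((\big[gcdn/0]_(i in S) val i == 1)%N)).
have [h3 h4] := allone alpha sub
  (fun S => bool01 ((gcdn n (\big[gcdn/0]_(i in S) val i) == 1)%N)).
by split; [move/esym/h1/esym | move/esym/h3/esym | exact: h2 | exact: h4].
Qed.
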